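(* Assume AM defends every real machine, i.e. $d_r=e_r$ for all $r\in\mathcal M$ (so $D=1$). Let $\pi^*$ be the naive AM strategy with $\pi^*_m=e_m$ for every $m\in\mathcal M$ (the strategy called Existence). Then: (i) the M strategy $\rho$ with $\rho_m=\tfrac12$ for all $m\in\mathcal M$ is a best response of M to $\pi^*$, and $\max_{\rho\in[0,1]^{\mathcal M}}u_M(\pi^*,\rho)=\tfrac14$, so that $u_{AM}(\pi^*,\rho)=\tfrac34$ for every best response $\rho$ to $\pi^*$; (ii) for every naive AM strategy $\pi$ and every best response $\rho$ of M to $\pi$, $u_{AM}(\pi,\rho)\le\tfrac34$. Consequently, Existence, together with a best response of M, is an AM-optimal equilibrium among naive AM strategies.
   Context: Let $\mathcal M$ be a finite nonempty set of machine (environment) types. Let $e\in[0,1]^{\mathcal M}$ with $\sum_{r\in\mathcal M}e_r=1$ ($e_r$ is the fraction of all real machines that are of type $r$), and $d\in[0,1]^{\mathcal M}$ with $0\le d_r\le e_r$ ($d_r$ is the fraction of all real machines that are of type $r$ and defended by the anti-malware AM); put $D=\sum_{r}d_r$. An AM strategy $\pi$ assigns to each real machine type $r\in\mathcal M$ a vector $\pi^r\in[0,1]^{\mathcal M}$ with $\sum_{m}\pi^r_m\le 1$ ($\pi^r_m$ is the probability that AM creates a sandbox of type $m$ on a defended real machine of type $r$; with probability $1-\sum_m\pi^r_m$ no sandbox is created). AM's strategy is naive if $\pi^r$ does not depend on $r$; then we write $\pi_m$ for $\pi^r_m$. A malware (M) strategy is a vector $\rho\in[0,1]^{\mathcal M}$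 ($\rho_m$ is the probability M attacks when it perceives environment $m$). The utilities are $$u_M(\pi,\rho)=\sum_{r\in\mathcal M}\Big[(e_r-d_r)\rho_r+d_r\Big(1-\sum_{m\in\mathcal M}\pi^r_m\rho_m\Big)\rho_r\Big],$$ $$u_{AM}(\pi,\rho)=\sum_{r\in\mathcal M}d_r\Big[\sum_{m\in\mathcal M}\big(\pi^r_m\rho_m+\pi^r_m(1-\rho_m)(1-\rho_r)\big)+\Big(1-\sum_{m\in\mathcal M}\pi^r_m\Big)(1-\rho_r)\Big].$$ A best response of M to $\pi$ is any $\rho\in\arg\max_{\hat\rho\in[0,1]^{\mathcal M}}u_M(\pi,\hat\rho)$. A pair $(\pi,\rho)$ with $\rho$ a best response to $\pi$ is an equilibrium; it is AM-optimal within a class of AM strategies if $\pi$ lies in the class and $u_{AM}(\pi,\rho)\ge u_{AM}(\pi',\rho')$ for every equilibrium $(\pi',\rho')$ with $\pi'$ in the class. *)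

(* Defs.v *)
From HB Require Import structures.
From mathcomp Require Import all_boot all_order all_algebra.
From mathcomp Require Import reals.
Set Implicit Arguments. Unset Strict Implicit. Unset Printing Implicit Defensive.
Import Order.TTheory GRing.Theory Num.Theory.
Local Open Scope ring_scope.

Section Game.
Variables (R : realType) (M : finType).

(* e r : fraction of real machines of type r *)
Definition valid_e (e : M -> R) : Prop :=
  (forall r, 0 <= e r <= 1) /\ \sum_(r : M) e r = 1.

(* d r : fraction of machines of type r defended; 0 <= d r <= e r *)
Definition valid_d (e d : M -> R) : Prop := forall r, 0 <= d r <= e r.

(* AM strategy: pi r m = prob. of sandbox of type m on real machine of type r *)
Definition AM_strategy (pi : M -> M -> R) : Prop :=
  (forall r m, 0 <= pi r m <= 1) /\ (forall r, \sum_(m : M) pi r m <= 1).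

Definition naive (pi : M -> M -> R) : Prop :=
  forall r1 r2 m, pi r1 m = pi r2 m.

Definition M_strategy (rho : M -> R) : Prop := forall m, 0 <= rho m <= 1.

Definition uM (e d : M -> R) (pi : M -> M -> R) (rho : M -> R) : R :=
  \sum_(r : M) ((e r - d r) * rho r
                + d r * (1 - \sum_(m : M) pi r m * rho m) * rho r).

Definition uAM (d : M -> R) (pi : M -> M -> R) (rho : M -> R) : R :=
  \sum_(r : M) d r *
    (\sum_(m : M) (pi r m * rho m + pi r m * (1 - rho m) * (1 - rho r))
     + (1 - \sum_(m : M) pi r m) * (1 - rho r)).

Definition best_response (e d : M -> R) (pi : M -> M -> R) (rho : M -> R) : Prop :=
  M_strategy rho /\
  forall rho', M_strategy rho' -> uM e d pi rho' <= uM e d pi rho.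

Definition AM_optimal_in (cls : (M -> M -> R) -> Prop) (e d : M -> R)
  (pi : M -> M -> R) (rho : M -> R) : Prop :=
  cls pi /\ best_response e d pi rho /\
  forall pi' rho', cls pi' -> best_response e d pi' rho' ->
    uAM d pi' rho' <= uAM d pi rho.

Definition naive_AM (pi : M -> M -> R) : Prop := AM_strategy pi /\ naive pi.

End Game.

(* Main.v *)
Require Import Defs.
From HB Require Import structures.
From mathcomp Require Import all_boot all_order all_algebra.
From mathcomp Require Import reals.
From mathcomp Require Import ring lra.
Import Order.TTheory GRing.Theory Num.Theory.
Local Open Scope ring_scope.
Set Implicit Arguments.

Lemma uAM_uM (R : realType) (M : finType) (e d : M -> R) pi rho :
  \sum_(r : M) e r = 1 -> (forall r, d r = e r) ->
  uAM d pi rho = 1 - uM e d pi rho.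
Proof.
move=> He Hd; rewrite /uAM /uM.
rewrite -[X in _ = X - _]He.
rewrite -sumrB; apply: eq_bigr => r _; rewrite Hd.
rewrite big_split /= -mulr_suml.
have -> : \sum_(m : M) pi r m * (1 - rho m) =
          \sum_(m : M) pi r m - \sum_(m : M) pi r m * rho m.
  by rewrite -sumrB; apply: eq_bigr => m _; rewrite mulrBr mulr1.
set x := \sum_(m : M) pi r m * rho m.
set S := \sum_(m : M) pi r m.
ring.
Qed.

Lemma uM_half_ge (R : realType) (M : finType) (e d : M -> R) pi :
  valid_e e -> (forall r, d r = e r) -> AM_strategy pi ->
  1 / 4 <= uM e d pi (fun _ => 1 / 2).
Proof.
move=> [He1 He] Hd [Hp1 Hp2]; rewrite /uM.
have -> : (1 / 4 : R) = \sum_(r : M) e r / 4 by rewrite -mulr_suml He.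
apply: ler_sum => r _; rewrite Hd -mulr_suml.
have := Hp2 r; have := He1 r.
set S := \sum_(m : M) pi r m => Her HS.
have h : 0 <= e r * (1 - S) by apply: mulr_ge0; lra.
nra.
Qed.

Lemma uM_star (R : realType) (M : finType) (e d : M -> R) rho :
  (forall r, d r = e r) ->
  uM e d (fun _ m => e m) rho =
  (1 - \sum_(m : M) e m * rho m) * \sum_(m : M) e m * rho m.
Proof.
move=> Hd; rewrite /uM mulr_sumr; apply: eq_bigr => r _; rewrite Hd.
set y := \sum_(m : M) e m * rho m; ring.
Qed.

Lemma uM_star_le (R : realType) (M : finType) (e d : M -> R) rho :
  (forall r, d r = e r) -> uM e d (fun _ m => e m) rho <= 1 / 4.
Proof.
move=> Hd; rewrite uM_star //.
set y := \sum_(m : M) e m * rho m.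
have h : 0 <= (y - 1/2) ^+ 2 by apply: sqr_ge0.
nra.
Qed.

Lemma uM_star_half (R : realType) (M : finType) (e d : M -> R) :
  valid_e e -> (forall r, d r = e r) ->
  uM e d (fun _ m => e m) (fun _ => 1 / 2) = 1 / 4.
Proof.
move=> [_ He] Hd; rewrite uM_star // -mulr_suml He; lra.
Qed.

Theorem theorem1 (R : realType) (M : finType) (e d : M -> R) :
  (0 < #|M|)%N -> valid_e e -> valid_d e d ->
  (forall r, d r = e r) ->
  let pistar : M -> M -> R := fun _ m => e m in
  let half : M -> R := fun _ => 1 / 2 in
  naive_AM pistar /\
  (* (i) *)
  (best_response e d pistar half /\
   (exists rho, M_strategy rho /\ uM e d pistar rho = 1 / 4) /\
   (forall rho, M_strategy rho -> uM e d pistar rho <= 1 / 4) /\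
   (forall rho, best_response e d pistar rho -> uAM d pistar rho = 3 / 4)) /\
  (* (ii) *)
  (forall pi rho, naive_AM pi -> best_response e d pi rho ->
     uAM d pi rho <= 3 / 4) /\
  (* consequence *)
  AM_optimal_in (@naive_AM R M) e d pistar half.
Proof.
move=> _ Hv _ Hd pistar half.
have Hnaive : naive_AM pistar.
  split=> //; split=> [r m|r]; first by case: Hv => H _; exact: H.
  by case: Hv => _ ->.
have Hhalf : M_strategy half by move=> m; rewrite /half; lra.
have Hbr : best_response e d pistar half.
  split=> // rho' _; rewrite uM_star_half //; exact: uM_star_le.
have Hii : forall pi rho, naive_AM pi -> best_response e d pi rho ->
     uAM d pi rho <= 3 / 4.
  move=> pi rho [Hs _] [_ Hb].
  rewrite (@uAM_uM _ _ _ _ _ _ (proj2 Hv) Hd).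
  have := Hb _ Hhalf; have := @uM_half_ge _ _ _ _ _ Hv Hd Hs; lra.
have H34 : uAM d pistar half = 3 / 4.
  rewrite (@uAM_uM _ _ _ _ _ _ (proj2 Hv) Hd).
  rewrite uM_star_half //; lra.
split=> //; split; last split.
- split=> //; split; first by exists half; split=> //; exact: uM_star_half.
  split; first by move=> rho _; exact: uM_star_le.
  move=> rho [_ Hb]; rewrite (@uAM_uM _ _ _ _ _ _ (proj2 Hv) Hd).
  have := Hb _ Hhalf; rewrite uM_star_half // => h1.
  have h2 := @uM_star_le _ _ e d rho Hd; lra.
- exact: Hii.
- split=> //; split=> // pi' rho' Hn Hb; rewrite H34; exact: Hii.
Qed.
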